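(* There is an absolute constant $c>0$ such that for all integers $m\ge 2$ and $d\ge 1$, every Steiner $2$-TC-spanner of the directed hypergrid $\mathcal{H}_{m,d}$ has at least $c\cdot \dfrac{m^d(\ln m-1)^d}{(4\pi)^d}$ edges, i.e. the number of edges is $\Omega\big(m^d(\ln m-1)^d/(4\pi)^d\big)$.
   Context: For a positive integer $m$, $[m]=\{1,\dots,m\}$. The directed hypergrid $\mathcal{H}_{m,d}$ has vertex set $[m]^d$ and an edge $(x,y)$ whenever there is a unique $i\in[d]$ with $y_i-x_i=1$ and $y_j=x_j$ for all $j\ne i$; its reachability order is the dominance order ($x\preceq y$ iff $x_i\le y_i$ for all $i$). For a directed graph $G=(V,E)$ and integer $k\ge1$, a Steiner $k$-TC-spanner of $G$ is a directed graph $H=(V_H,E_H)$ with $V\subseteq V_H$ such that for all $u,v\in V$: if $v$ is reachable from $u$ in $G$ then $H$ contains a directed path from $u$ to $v$ of length at most $k$, and if $v$ is not reachable from $u$ in $G$ then $v$ is not reachable from $u$ in $H$. Vertices of $V_H\setminus V$ are Steiner vertices. $\ln$ is the natural logarithm. *)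

(* Defs.v *)
From mathcomp Require Import all_boot.
From Stdlib Require Import Reals.
Set Implicit Arguments. Unset Strict Implicit. Unset Printing Implicit Defensive.

(* Vertices of the hypergrid H_{m,d}: functions [d] -> [m], 0-indexed
   ('I_d -> 'I_m), i.e. [m]^d shifted by one in each coordinate. *)
Definition grid (m d : nat) : finType := {ffun 'I_d -> 'I_m}.

(* Edge (x,y) of H_{m,d}: a unique coordinate i with y_i - x_i = 1,
   all other coordinates equal (uniqueness is automatic). *)
Definition grid_edge (m d : nat) : rel (grid m d) :=
  fun x y => [exists i : 'I_d, (nat_of_ord (y i) == (x i).+1) &&
                               [forall j : 'I_d, (j != i) ==> (y j == x j)]].

Definition grid_reach (m d : nat) (x y : grid m d) : bool :=
  connect (@grid_edge m d) x y.

(* A directed graph H on vertex type T (an eqType; Steiner vertices allowed)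
   given by its (finite, duplicate-free) list of edges Es. *)
Definition edge_rel (T : eqType) (Es : seq (T * T)) : rel T :=
  fun a b => (a, b) \in Es.

(* a directed path in H from a to b of length (= number of edges) size p *)
Definition hpath (T : eqType) (Es : seq (T * T)) (a b : T) (p : seq T) : bool :=
  path (edge_rel Es) a p && (last a p == b).

Definition h_reach (T : eqType) (Es : seq (T * T)) (a b : T) : Prop :=
  exists p : seq T, hpath Es a b p.

(* H (with V embedded into V_H by the injection f) is a Steiner k-TC-spanner of H_{m,d} *)
Definition steiner_tc_spanner (k m d : nat) (T : eqType) (f : grid m d -> T)
    (Es : seq (T * T)) : Prop :=
  injective f /\
  (forall u v : grid m d,
     (grid_reach u v -> exists p : seq T, size p <= k /\ hpath Es (f u) (f v) p) /\
     (~~ grid_reach u v -> ~ h_reach Es (f u) (f v))).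

(* Main.v *)
Require Import Defs.
From mathcomp Require Import all_boot.
From Stdlib Require Import Reals.
Set Implicit Arguments. Unset Strict Implicit. Unset Printing Implicit Defensive.
From Stdlib Require Import Lra.
Lemma ln_le' (x y : R) : (0 < x -> x <= y -> ln x <= ln y)%R.
Proof.
move=> hx hxy; case: (Rle_lt_or_eq_dec _ _ hxy) => h.
  by apply: Rlt_le; apply: ln_increasing.
by rewrite h; apply: Rle_refl.
Qed.

Lemma ln_le_sub1 (z : R) : (0 < z -> ln z <= z - 1)%R.
Proof.
move=> hz; have h := exp_ineq1_le (z - 1).
have h2 : (z <= exp (z - 1))%R by lra.
by rewrite -[X in (_ <= X)%R](ln_exp (z - 1)); apply: ln_le'.
Qed.

Lemma ln_diff (x y : R) : (0 < x -> 0 < y -> ln y - ln x <= (y - x) / x)%R.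
Proof.
move=> hx hy.
have e : (ln y - ln x = ln (y / x))%R.
  rewrite /Rdiv ln_mult //; last by apply: Rinv_0_lt_compat.
  by rewrite ln_Rinv //; lra.
rewrite e; apply: (Rle_trans _ _ _ (ln_le_sub1 _)).
  by apply: Rdiv_lt_0_compat.
right; field; lra.
Qed.

Lemma ln2_le1 : (ln 2 <= 1)%R.
Proof.
have h := exp_ineq1_le 1.
rewrite -[X in (_ <= X)%R](ln_exp 1); apply: ln_le'; lra.
Qed.

Lemma ln_ge0 (x : R) : (1 <= x -> 0 <= ln x)%R.
Proof. by move=> h; rewrite -ln_1; apply: ln_le'; lra. Qed.

Lemma PI_gt1 : (1 < PI)%R.
Proof. have := PI2_1; lra. Qed.

Lemma c15 : (0 < / 15)%R.
Proof. apply: Rinv_0_lt_compat; lra. Qed.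

From mathcomp Require Import all_boot.
From mathcomp Require Import zify.

Definition leg m d (x y : grid m d) := [forall i, x i <= y i].

Lemma edge_le m d (x y : grid m d) : grid_edge x y -> leg x y.
Proof.
move=> /existsP [i /andP [/eqP hi /forallP h]]; apply/forallP => j.
case: (eqVneq j i) => [->|ne]; first by rewrite hi.
by move: (h j); rewrite ne /= => /eqP ->.
Qed.

Lemma reach_le m d (x y : grid m d) : grid_reach x y -> leg x y.
Proof.
move=> /connectP [p]; elim: p x => [|z p IH] x /=.
  by move=> _ ->; apply/forallP.
move=> /andP [e pa] hy; have h1 := edge_le e; have h2 := IH z pa hy.
apply/forallP => i; apply: leq_trans ((forallP h1) i) ((forallP h2) i).
Qed.

Lemma le_reach m d (x y : grid m d) : leg x y -> grid_reach x y.
Proof.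
move: {2}(\sum_i (y i - x i)) (leqnn (\sum_i (y i - x i))) => n.
elim: n x => [|n IH] x hn hle.
  have -> : x = y; last by apply: connect0.
  apply/ffunP => i; apply/val_inj/eqP; rewrite eqn_leq ((forallP hle) i) /=.
  have : (y i - x i <= \sum_j (y j - x j))%N by rewrite (bigD1 i) //= leq_addr.
  move=> h; move: hn; rewrite leqn0 => /eqP hn; rewrite hn in h; by rewrite -subn_eq0 -leqn0.
case: (boolP [exists i, x i < y i]) => [/existsP [i hi] | hne].
  have him : (x i).+1 < m by apply: leq_ltn_trans hi (ltn_ord (y i)).
  pose x' : grid m d := [ffun j => if j == i then Ordinal him else x j].
  have e : grid_edge x x'.
    apply/existsP; exists i; rewrite /x' ffunE eqxx /= eqxx /=.
    by apply/forallP => j; apply/implyP => nj; rewrite ffunE (negbTE nj).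
  apply: connect_trans (connect1 e) _; apply: IH.
    have hs : (\sum_j (y j - x j) = (\sum_j (y j - x' j)).+1)%N.
      rewrite (bigD1 i) //= [in RHS](bigD1 i) //= /x' ffunE eqxx /=.
      rewrite -addSn; congr (_ + _)%N; first by symmetry; exact: (subnSK hi).
      by apply: eq_bigr => j nj; rewrite ffunE (negbTE nj).
    by move: hn; rewrite hs ltnS.
  apply/forallP => j; rewrite /x' ffunE; case: eqP => [->|_]; [exact: hi | exact: (forallP hle)].
have -> : x = y; last by apply: connect0.
apply/ffunP => i; apply/val_inj/eqP; rewrite eqn_leq ((forallP hle) i) /=.
by move: hne; rewrite negb_exists => /forallP /(_ i); rewrite -leqNgt.
Qed.

From mathcomp Require Import all_boot all_order all_algebra.
From mathcomp Require Import ring lra.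
Import Order.TTheory GRing.Theory Num.Theory.
Local Open Scope ring_scope.

Section Core.
Variable R : rcfType.

Lemma stepA (a b : R) : 0 <= a -> 0 < b -> b^+2 = a^+2 + 1 -> b^-1 <= 2 * (b - a).
Proof.
move=> ha hb e.
have -> : 2 * (b - a) = b^-1 + (2 * b * (b - a) - 1) / b.
  by field; lra.
rewrite lerDl; apply: divr_ge0; [nra | lra].
Qed.

Lemma stepB (a b : R) : 0 < a -> 0 < b -> b^+2 = a^+2 + 1 ->
  (b^+2 * b)^-1 <= 2 * (a^-1 - b^-1).
Proof.
move=> ha hb e.
have hba : a < b by nra.
have -> : 2 * (a^-1 - b^-1) = (b^+2 * b)^-1 + (2 * b^+2 * (b - a) - a) / (a * b ^+ 3).
  field; lra.
rewrite lerDl; apply: divr_ge0; last by apply: mulr_ge0; [lra | apply: exprn_ge0; lra].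
have h1 : 0 <= (b - a) * (b * (b - a) + 1) by apply: mulr_ge0; nra.
have h2 : a * b^+2 = a * (a^+2 + 1) by rewrite e.
nra.
Qed.

Definition sq (n : nat) : R := Num.sqrt n%:R.

Lemma sq_ge0 n : 0 <= sq n. Proof. exact: sqrtr_ge0. Qed.
Lemma sq_gt0 n : (0 < n)%N -> 0 < sq n.
Proof. by move=> h; rewrite /sq sqrtr_gt0 ltr0n. Qed.
Lemma sq_sqr n : sq n ^+ 2 = n%:R.
Proof. by rewrite /sq sqr_sqrtr // ler0n. Qed.
Lemma sq_S n : sq n.+1 ^+ 2 = sq n ^+ 2 + 1.
Proof. by rewrite !sq_sqr -natr1. Qed.

Definition B (u n : nat) : R :=
  if (n <= u)%N then 2 * sq n / u%:R else 4 / sq u - 2 / sq n.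

Lemma core_B (u n : nat) : (0 < u)%N ->
  \sum_(j < n) (((u + j)%:R * sq j.+1)^-1) <= B u n.
Proof.
move=> hu; elim: n => [|n IH]; first by rewrite big_ord0 /B /= /sq sqrtr0 mulr0 mul0r.
rewrite big_ord_recr /=.
have hb := sq_gt0 (ltn0Sn n); have ha := sq_ge0 n; have e := sq_S n.
have hU : (0 : R) < u%:R by rewrite ltr0n.
have hsu := sq_gt0 hu.
case: (leqP n.+1 u) => h1.
  have hn : (n <= u)%N by apply: ltnW.
  move: IH; rewrite /B h1 hn => IH.
  have t1 : ((u + n)%:R * sq n.+1)^-1 <= u%:R^-1 * (sq n.+1)^-1.
    rewrite -invfM lef_pV2 ?posrE ?mulr_gt0 ?ltr0n ?addn_gt0 ?hu //.
    by rewrite ler_pM2r // ler_nat leq_addr.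
  have t2 := stepA ha hb e.
  have : u%:R^-1 * (sq n.+1)^-1 <= u%:R^-1 * (2 * (sq n.+1 - sq n)).
    by rewrite ler_pM2l // invr_gt0.
  move=> t3.
  have -> : 2 * sq n.+1 / u%:R = 2 * sq n / u%:R + u%:R^-1 * (2 * (sq n.+1 - sq n)).
    by field; lra.
  apply: lerD => //; exact: le_trans t1 t3.
rewrite /B leqNgt h1 /=.
have hn1 : (0 < n)%N by apply: leq_trans hu _.
have ha' := sq_gt0 hn1.
have IH' : \sum_(i < n) ((u + i)%:R * sq i.+1)^-1 <= 4 / sq u - 2 / sq n.
  move: IH; rewrite /B; case: (leqP n u) => h2 //.
  have -> : n = u by apply/eqP; rewrite eqn_leq h2.
  move=> IH; apply: (le_trans IH); rewrite -[u%:R](sq_sqr u).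
  have -> : 2 * sq u / sq u ^+ 2 = 2 / sq u by field; lra.
  lra.
have t1 : ((u + n)%:R * sq n.+1)^-1 <= (sq n.+1 ^+ 2 * sq n.+1)^-1.
  rewrite lef_pV2 ?posrE ?mulr_gt0 ?ltr0n ?addn_gt0 ?hu ?exprn_gt0 //.
  by rewrite ler_pM2r // sq_sqr ler_nat addnC -[n.+1]addn1 leq_add2l.
have t2 := stepB ha' hb e.
have -> : 4 / sq u - 2 / sq n.+1 = (4 / sq u - 2 / sq n) + 2 * ((sq n)^-1 - (sq n.+1)^-1).
  by rewrite /=; field; lra.
apply: lerD => //; exact: le_trans t1 t2.
Qed.

Lemma core (u n : nat) : (0 < u)%N ->
  \sum_(j < n) (((u + j)%:R * sq j.+1)^-1) <= 4 / sq u.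
Proof.
move=> hu; apply: (le_trans (core_B n hu)); rewrite /B.
have hsu := sq_gt0 hu.
case: leqP => h.
  have : sq n <= sq u by rewrite /sq ler_sqrt ?ler0n // ler_nat.
  move=> h2; rewrite -[u%:R](sq_sqr u).
  have -> : 2 * sq n / sq u ^+ 2 = 2 * sq n / sq u / sq u by field; lra.
  have h3 : 2 * sq n / sq u <= 4 by rewrite ler_pdivrMr //; nra.
  by rewrite ler_pM2r ?invr_gt0.
rewrite lerBlDr lerDl divr_ge0 //; exact: sq_ge0.
Qed.

End Core.

From mathcomp Require Import all_boot all_order all_algebra.
From mathcomp Require Import ring lra zify.
Import Order.TTheory GRing.Theory Num.Theory.
Local Open Scope ring_scope.

Section Bic.
Variable R : rcfType.
Variable m : nat.

Definition kk (a c : nat) : R := ((c - a).+1)%:R^-1.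
Definition phi (n : nat) : R := (sq R n)^-1.

Lemma kk_ge0 a c : 0 <= kk a c. Proof. by rewrite /kk invr_ge0 ler0n. Qed.
Lemma kk_le1 a c : kk a c <= 1. Proof. by rewrite /kk invf_le1 ?ltr0n // ler1n. Qed.
Lemma phi_gt0 n : 0 < phi n.+1. Proof. by rewrite /phi invr_gt0 sq_gt0. Qed.

Lemma RS (a t : nat) : (a <= t)%N ->
  \sum_(c < m | (t <= c)%N) kk a c * phi (c - t).+1 <= 4 * phi (t - a).+1.
Proof.
move=> hat.
have E : \sum_(c < m | (t <= c)%N) kk a c * phi (c - t).+1 =
         \sum_(0 + t <= c < m) kk a c * phi (c - t).+1.
  by rewrite add0n big_geq_mkord; apply: eq_bigl => c.
rewrite E big_addn big_mkord.
have -> : \sum_(j < m - t) kk a (j + t) * phi (j + t - t).+1 =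
          \sum_(j < m - t) (((t - a).+1 + j)%:R * sq R j.+1)^-1.
  apply: eq_bigr => j _; rewrite /kk /phi addnK -invfM; congr (_^-1); congr (_ * _).
  by congr (_%:R); rewrite addSn; congr (_.+1); lia.
rewrite /phi; exact: core.
Qed.

Lemma LS (b t : nat) : (t <= b)%N -> (t < m)%N ->
  \sum_(c < m | (c <= t)%N) kk c b * phi (t - c).+1 <= 4 * phi (b - t).+1.
Proof.
move=> htb htm.
have E : \sum_(c < m | (c <= t)%N) kk c b * phi (t - c).+1 =
         \sum_(0 <= c < t.+1) kk c b * phi (t - c).+1.
  rewrite (big_nat_widen _ _ _ _ _ htm) big_mkord; apply: eq_bigl => c.
  by rewrite ltnS.
rewrite E big_nat_rev big_mkord add0n.
have -> : \sum_(j < t.+1) kk (t.+1 - j.+1) b * phi (t - (t.+1 - j.+1)).+1 =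
          \sum_(j < t.+1) (((b - t).+1 + j)%:R * sq R j.+1)^-1.
  apply: eq_bigr => j _; have hj := ltn_ord j.
  rewrite /kk /phi subSS -invfM; congr (_^-1); congr (_ * _).
    congr (_%:R); rewrite addSn; congr (_.+1).
    lia.
  by rewrite subKn.
rewrite /phi; exact: core.
Qed.
End Bic.

From mathcomp Require Import all_boot all_order all_algebra.
From mathcomp Require Import ring lra zify.
Import Order.TTheory GRing.Theory Num.Theory.
Local Open Scope ring_scope.

Section Multi.
Variable R : rcfType.
Variables m d : nat.

Definition K (x y : grid m d) : R := \prod_i kk R (x i) (y i).

Lemma K_ge0 x y : 0 <= K x y.
Proof. by apply: prodr_ge0 => i _; exact: kk_ge0. Qed.
Lemma K_le1 x y : K x y <= 1.
Proof.
have : \prod_i kk R (x i) (y i) <= \prod_(i < d) (1:R).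
  by apply: ler_prod => i _; rewrite kk_ge0 kk_le1.
by rewrite big1_eq.
Qed.

Lemma prod_if (P : pred 'I_d) (F : 'I_d -> R) :
  \prod_i (if P i then F i else 0) = if [forall i, P i] then \prod_i F i else 0.
Proof.
case: (boolP [forall i, P i]) => [/forallP h | ].
  by apply: eq_bigr => i _; rewrite h.
rewrite negb_forall => /existsP [i hi].
by rewrite (bigD1 i) //= (negbTE hi) mul0r.
Qed.

Lemma factor (P : 'I_d -> pred 'I_m) (F : 'I_d -> 'I_m -> R) :
  \sum_(x : grid m d | [forall i, P i (x i)]) \prod_i F i (x i) =
  \prod_i \sum_(c < m | P i c) F i c.
Proof.
under [RHS]eq_bigr => i _ do rewrite big_mkcond /=.
rewrite bigA_distr_bigA big_mkcond /=; apply: eq_bigr => x _.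
by rewrite prod_if.
Qed.

Lemma r_inv (r : R) : 0 < r -> 1 <= r + r^-1.
Proof.
move=> hr; case: (lerP 1 r) => h.
  by rewrite -[1]addr0 lerD // invr_ge0 ltW.
have hi : 1 <= r^-1 by rewrite invf_ge1 // ltW.
lra.
Qed.

Lemma biclique (A B : {set grid m d}) :
  (forall a b, a \in A -> b \in B -> leg a b) ->
  \sum_(a in A) \sum_(b in B) K a b <= 4 ^+ d * (#|A|%:R + #|B|%:R).
Proof.
move=> hAB.
have h0 : forall X Y : {set grid m d}, 0 <= 4 ^+ d * (#|X|%:R + #|Y|%:R) :> R.
  move=> X Y.
  by apply: mulr_ge0; [apply: exprn_ge0 | apply: addr_ge0; apply: ler0n].
case: (set_0Vmem A) => [-> | [a0 ha0]]; first by rewrite big_set0 h0.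
case: (set_0Vmem B) => [-> | [b0 hb0]].
  by rewrite big1 ?h0 // => a _; rewrite big_set0.
pose t i := (\max_(a in A) (a i : nat))%N.
have tA : forall a i, a \in A -> (a i <= t i)%N.
  by move=> a i ha; rewrite /t; apply: leq_bigmax_cond.
have tB : forall b i, b \in B -> (t i <= b i)%N.
  move=> b i hb; apply/bigmax_leqP => a ha; exact: (forallP (hAB a b ha hb)).
have tm : forall i, (t i < m)%N by move=> i; apply: leq_ltn_trans (tB b0 i hb0) _.
pose P (a : grid m d) := \prod_i phi R (t i - a i).+1.
pose Q (b : grid m d) := \prod_i phi R (b i - t i).+1.
have Pp : forall a, 0 < P a by move=> a; apply: prodr_gt0 => i _; exact: phi_gt0.
have Qp : forall b, 0 < Q b by move=> b; apply: prodr_gt0 => i _; exact: phi_gt0.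
have step1 : \sum_(a in A) \sum_(b in B) K a b <=
   \sum_(a in A) \sum_(b in B) (K a b * Q b * (P a)^-1) +
   \sum_(a in A) \sum_(b in B) (K a b * P a * (Q b)^-1).
  rewrite -big_split /=; apply: ler_sum => a _; rewrite -big_split /=.
  apply: ler_sum => b _.
  have -> : K a b * Q b * (P a)^-1 + K a b * P a * (Q b)^-1 =
            K a b * (Q b / P a + (Q b / P a)^-1).
    rewrite invf_div; field; apply/andP; split; exact: lt0r_neq0.
  apply: ler_peMr; first exact: K_ge0.
  apply: r_inv; exact: divr_gt0.
apply: (le_trans step1); rewrite mulrDr; apply: lerD.
  rewrite mulr_natr -sumr_const; apply: ler_sum => a ha.
  rewrite -mulr_suml ler_pdivrMr //.
  apply: (@le_trans _ _ (\sum_(b : grid m d | [forall i, (t i <= b i)%N]) K a b * Q b)).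
    rewrite big_mkcond [X in _ <= X]big_mkcond; apply: ler_sum => b _.
    case: (boolP (b \in B)) => hb.
      have -> : [forall i, (t i <= b i)%N] by apply/forallP => i; exact: tB.
      done.
    case: ifP => _ //; apply: mulr_ge0; [exact: K_ge0 | exact: ltW].
  have := factor (fun i c => (t i <= c)%N) (fun i c => kk R (a i) c * phi R (c - t i).+1).
  move=> /= E.
  have -> : \sum_(b : grid m d | [forall i, (t i <= b i)%N]) K a b * Q b =
     \prod_i \sum_(c < m | (t i <= c)%N) kk R (a i) c * phi R (c - t i).+1.
    rewrite -E; apply: eq_bigr => b _; by rewrite /K /Q -big_split.
  have -> : 4 ^+ d * P a = \prod_i (4 * phi R (t i - a i).+1).
    by rewrite big_split /= prodr_const card_ord.
  apply: ler_prod => i _; apply/andP; split.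
    by apply: sumr_ge0 => c _; apply: mulr_ge0; [exact: kk_ge0 | exact: ltW (phi_gt0 _ _)].
  exact: RS (tA a i ha).
rewrite exchange_big /= mulr_natr -sumr_const; apply: ler_sum => b hb.
rewrite -mulr_suml ler_pdivrMr //.
apply: (@le_trans _ _ (\sum_(a : grid m d | [forall i, (a i <= t i)%N]) K a b * P a)).
  rewrite big_mkcond [X in _ <= X]big_mkcond; apply: ler_sum => a _.
  case: (boolP (a \in A)) => ha.
    have -> : [forall i, (a i <= t i)%N] by apply/forallP => i; exact: tA.
    done.
  case: ifP => _ //; apply: mulr_ge0; [exact: K_ge0 | exact: ltW].
have := factor (fun i c => (c <= t i)%N) (fun i c => kk R c (b i) * phi R (t i - c).+1).
move=> /= E.
have -> : \sum_(a : grid m d | [forall i, (a i <= t i)%N]) K a b * P a =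
   \prod_i \sum_(c < m | (c <= t i)%N) kk R c (b i) * phi R (t i - c).+1.
  rewrite -E; apply: eq_bigr => a _; by rewrite /K /P -big_split.
have -> : 4 ^+ d * Q b = \prod_i (4 * phi R (b i - t i).+1).
  by rewrite big_split /= prodr_const card_ord.
apply: ler_prod => i _; apply/andP; split.
  by apply: sumr_ge0 => c _; apply: mulr_ge0; [exact: kk_ge0 | exact: ltW (phi_gt0 _ _)].
exact: LS (tB b i hb) (tm i).
Qed.

End Multi.

From mathcomp Require Import all_boot all_order all_algebra.
From mathcomp Require Import ring lra zify.
Import Order.TTheory GRing.Theory Num.Theory.

Lemma sum_count_le (T : eqType) (W s : seq T) : uniq W ->
  (\sum_(w <- W) count (pred1 w) s <= size s)%N.
Proof.
move=> uW; elim: s => [|z s IH] /=; first by rewrite big1.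
rewrite big_split /= -add1n; apply: leq_add => //.
have -> : (\sum_(w <- W) (z == w) = count (pred1 z) W)%N.
  rewrite -sum1_count [RHS]big_mkcond /=; apply: eq_bigr => w _; by rewrite eq_sym; case: (w == z).
by rewrite count_uniq_mem // leq_b1.
Qed.

Local Open Scope ring_scope.

Lemma le_sum_seq (R : numDomainType) (I : eqType) (W : seq I) (w : I) (F : I -> R) :
  uniq W -> w \in W -> (forall i, 0 <= F i) -> F w <= \sum_(i <- W) F i.
Proof.
move=> uW hw h; rewrite (bigD1_seq _ hw uW) /= lerDl; exact: sumr_ge0.
Qed.

Section Main.
Variable R : rcfType.
Variables (m d : nat) (T : eqType) (f : grid m d -> T) (Es : seq (T * T)).
Hypothesis uE : uniq Es.
Hypothesis sp : steiner_tc_spanner 2 f Es.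

Let W := undup (map snd Es).
Let Aw w := [set x : grid m d | (f x, w) \in Es].
Let Bw w := [set y : grid m d | (w, f y) \in Es].

Lemma finj : injective f. Proof. by case: sp. Qed.

Lemma cardA w : (#|Aw w| <= count (pred1 w) (map snd Es))%N.
Proof.
rewrite count_map -size_filter cardE -(size_map (fun x => (f x, w))).
apply: uniq_leq_size.
  rewrite map_inj_uniq ?enum_uniq // => x y [] /finj //.
move=> e /mapP [x]; rewrite mem_enum inE => hx ->.
by rewrite mem_filter /= eqxx.
Qed.

Lemma cardB w : (#|Bw w| <= count (pred1 w) (map fst Es))%N.
Proof.
rewrite count_map -size_filter cardE -(size_map (fun x => (w, f x))).
apply: uniq_leq_size.
  rewrite map_inj_uniq ?enum_uniq // => x y [] /finj //.
move=> e /mapP [x]; rewrite mem_enum inE => hx ->.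
by rewrite mem_filter /= eqxx.
Qed.

Lemma sumA : (\sum_(w <- W) #|Aw w| <= size Es)%N.
Proof.
apply: (@leq_trans (\sum_(w <- W) count (pred1 w) (map snd Es))).
  by apply: leq_sum => w _; exact: cardA.
rewrite -(size_map snd); apply: sum_count_le; exact: undup_uniq.
Qed.

Lemma sumB : (\sum_(w <- W) #|Bw w| <= size Es)%N.
Proof.
apply: (@leq_trans (\sum_(w <- W) count (pred1 w) (map fst Es))).
  by apply: leq_sum => w _; exact: cardB.
rewrite -(size_map fst); apply: sum_count_le; exact: undup_uniq.
Qed.

Lemma AB_le w a b : a \in Aw w -> b \in Bw w -> leg a b.
Proof.
rewrite !inE => ha hb; apply: reach_le; apply/negPn/negP => h.
case: sp => _ /(_ a b) [_ /(_ h)]; apply; exists [:: w; f b].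
by rewrite /hpath /= /edge_rel ha hb eqxx.
Qed.

Lemma hub x y : leg x y -> x != y ->
  K R x y <= \sum_(w <- W) ((x \in Aw w) && (f y == w))%:R +
             \sum_(w <- W) (if (x \in Aw w) && (y \in Bw w) then K R x y else 0).
Proof.
move=> hle hne.
have [p [hp hpa]] := proj1 ((proj2 sp) x y) (le_reach hle).
have nn1 : forall w, 0 <= ((x \in Aw w) && (f y == w))%:R :> R by move=> w; apply: ler0n.
have nn2 : forall w, 0 <= (if (x \in Aw w) && (y \in Bw w) then K R x y else 0).
  by move=> w; case: ifP => _ //; exact: K_ge0.
move: hpa; rewrite /hpath; case: p hp => [|z [|z2 [|z3 p]]] //= hp.
- by move=> /eqP /finj e; rewrite e eqxx in hne.
- rewrite /edge_rel andbT => /andP [he /eqP e]; subst z.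
  have hw : f y \in W by rewrite mem_undup; apply/mapP; exists (f x, f y).
  apply: (@le_trans _ _ (\sum_(w <- W) ((x \in Aw w) && (f y == w))%:R)); last first.
    by rewrite lerDl; apply: sumr_ge0.
  apply: (le_trans (@K_le1 R m d x y)); apply: (le_trans _ (le_sum_seq (undup_uniq _) hw nn1)).
  by rewrite inE he eqxx.
- rewrite /edge_rel andbT => /andP [/andP [h1 h2] /eqP e]; subst z2.
  have hw : z \in W by rewrite mem_undup; apply/mapP; exists (f x, z).
  apply: (@le_trans _ _ (\sum_(w <- W) (if (x \in Aw w) && (y \in Bw w) then K R x y else 0))); last first.
    by rewrite lerDr; apply: sumr_ge0.
  apply: (le_trans _ (le_sum_seq (undup_uniq _) hw nn2)).
  by rewrite !inE h1 h2.
Qed.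

Lemma card_sum (A : {set grid m d}) : #|A|%:R = \sum_x (x \in A)%:R :> R.
Proof.
by rewrite -sum1_card natr_sum big_mkcond /=; apply: eq_bigr => x _; case: (x \in A).
Qed.

Lemma mainS : \sum_(x : grid m d) \sum_(y : grid m d)
   (if leg x y && (x != y) then K R x y else 0) <= (1 + 2 * 4 ^+ d) * (size Es)%:R.
Proof.
pose G1 x y := \sum_(w <- W) ((x \in Aw w) && (f y == w))%:R : R.
pose G2 x y := \sum_(w <- W) (if (x \in Aw w) && (y \in Bw w) then K R x y else 0).
apply: (@le_trans _ _ (\sum_x \sum_y (G1 x y + G2 x y))).
  apply: ler_sum => x _; apply: ler_sum => y _.
  case: ifP => [/andP [h1 h2] | _]; first exact: hub.
  apply: addr_ge0; apply: sumr_ge0 => w _; first exact: ler0n.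
  by case: ifP => _ //; exact: K_ge0.
have -> : \sum_x \sum_y (G1 x y + G2 x y) = \sum_x \sum_y G1 x y + \sum_x \sum_y G2 x y.
  rewrite -big_split /=; apply: eq_bigr => x _; exact: big_split.
have H1 : \sum_x \sum_y G1 x y <= (size Es)%:R.
  rewrite /G1; under eq_bigr => x _ do rewrite exchange_big; rewrite exchange_big /=.
  apply: (@le_trans _ _ (\sum_(w <- W) (#|Aw w|)%:R)); last by rewrite -natr_sum ler_nat; exact: sumA.
  apply: ler_sum => w _; rewrite card_sum; apply: ler_sum => x _.
  case: (x \in Aw w) => /=; last by rewrite big1.
  case: (pickP (fun y => f y == w)) => [y0 /eqP hy0 | hn].
    rewrite (bigD1 y0) //= hy0 eqxx big1 ?addr0 // => y hy.
    by rewrite -hy0; case: eqP => // /finj e; rewrite e eqxx in hy.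
  by rewrite big1 // => y _; rewrite hn.
have H2 : \sum_x \sum_y G2 x y <= 2 * 4^+d * (size Es)%:R.
  rewrite /G2; under eq_bigr => x _ do rewrite exchange_big; rewrite exchange_big /=.
  apply: (@le_trans _ _ (\sum_(w <- W) 4^+d * (#|Aw w|%:R + #|Bw w|%:R))).
    apply: ler_sum => w _.
    have -> : \sum_x \sum_y (if (x \in Aw w) && (y \in Bw w) then K R x y else 0) =
              \sum_(x in Aw w) \sum_(y in Bw w) K R x y.
      rewrite [RHS]big_mkcond /=; apply: eq_bigr => x _.
      case: (x \in Aw w) => /=; first by rewrite [RHS]big_mkcond.
      by rewrite big1.
    apply: biclique => a b; exact: AB_le.
  rewrite -mulr_sumr big_split /= -!natr_sum.
  have hA : ((\sum_(w <- W) #|Aw w|)%:R <= (size Es)%:R :> R) by rewrite ler_nat sumA.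
  have hB : ((\sum_(w <- W) #|Bw w|)%:R <= (size Es)%:R :> R) by rewrite ler_nat sumB.
  have h4 : 0 <= 4 ^+ d :> R by apply: exprn_ge0.
  rewrite (mulrC 2) -mulrA; apply: ler_wpM2l => //; lra.
rewrite mulrDl mul1r; exact: lerD.
Qed.

End Main.

From mathcomp Require Import all_boot all_order all_algebra.
From mathcomp Require Import ring lra zify.
Import Order.TTheory GRing.Theory Num.Theory.
Local Open Scope ring_scope.

Section Tot.
Variable R : rcfType.
Variables m d : nat.

Definition H (b : nat) : R := \sum_(a < b.+1) kk R a b.
Definition S : R := \sum_(b < m) H b.

Lemma HS b : H b.+1 = (b.+2%:R)^-1 + H b.
Proof.
rewrite /H big_ord_recl /= /kk subn0; congr (_ + _).
Qed.

Lemma S_eq : \sum_(a : 'I_m) \sum_(c : 'I_m) (if (a <= c)%N then kk R a c else 0) = S.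
Proof.
rewrite exchange_big /S; apply: eq_bigr => b _.
rewrite -big_mkcond /= /H.
rewrite (big_ord_widen_cond m (fun a : nat => true) (fun a => kk R a b) (ltn_ord b)).
by apply: eq_bigl => a; rewrite ltnS.
Qed.

Lemma Wall : \sum_(x : grid m d) \sum_(y : grid m d) (if leg x y then K R x y else 0) = S ^+ d.
Proof.
rewrite -S_eq -[d in RHS]card_ord -prodr_const.
rewrite bigA_distr_bigA /=; apply: eq_bigr => x _.
rewrite bigA_distr_bigA /=; apply: eq_bigr => y _.
by rewrite prod_if.
Qed.

Lemma Kxx (x : grid m d) : K R x x = 1 :> R.
Proof. by rewrite /K big1 // => i _; rewrite /kk subnn invr1. Qed.

Lemma Wstrict : \sum_(x : grid m d) \sum_(y : grid m d)
   (if leg x y && (x != y) then K R x y else 0) = S ^+ d - (m ^ d)%:R.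
Proof.
rewrite -Wall.
have -> : (m ^ d)%:R = \sum_(x : grid m d) (1 : R).
  by rewrite sumr_const card_ffun !card_ord.
rewrite -sumrB; apply: eq_bigr => x _.
rewrite (bigD1 x) //= [X in _ = X - _](bigD1 x) //=.
have -> : leg x x by apply/forallP.
rewrite Kxx eqxx andbF add0r.
rewrite addrAC subrr add0r.
rewrite big_mkcond [RHS]big_mkcond /=; apply: eq_bigr => y _.
by case: (eqVneq y x) => [-> //| ne] /=; rewrite andbT.
Qed.

End Tot.

Section SB.
Variable R : rcfType.

Lemma H0 : H R 0 = 1.
Proof. by rewrite /H big_ord1 /kk subn0 invr1. Qed.

Lemma H_ge1 b : 1 <= H R b.
Proof.
elim: b => [|b IH]; first by rewrite H0.
rewrite HS; apply: (le_trans IH); rewrite lerDr invr_ge0; exact: ler0n.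
Qed.

Lemma H_ge32 b : 3 / 2 <= H R b.+1.
Proof.
elim: b => [|b IH].
  have e : ((2%:R : R)^-1 + 1 = 3 / 2) by field.
  by rewrite HS H0 e.
rewrite HS; apply: (le_trans IH); rewrite lerDr invr_ge0; exact: ler0n.
Qed.

Lemma S_ge m : (2 <= m)%N -> 5 / 4 * m%:R <= S R m.
Proof.
case: m => [|[|n]] // _; rewrite /S big_ord_recl H0.
have : \sum_(i < n.+1) (3 / 2 : R) <= \sum_(i < n.+1) H R (bump 0 i).
  by apply: ler_sum => i _; exact: H_ge32.
rewrite sumr_const card_ord => h.
apply: (le_trans _ (lerD (lexx 1) h)).
rewrite -[3 / 2 *+ _]mulr_natr.
have -> : (n.+2%:R : R) = n.+1%:R + 1 by rewrite -natr1.
have : (1 : R) <= n.+1%:R by rewrite ler1n.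
lra.
Qed.
End SB.

From mathcomp Require Import all_boot all_order all_algebra.
From Stdlib Require Import Reals Lra.
From mathcomp Require Import Rstruct.
Import Order.TTheory GRing.Theory Num.Theory.

From mathcomp Require Import ring lra zify.
Local Open Scope ring_scope.

Lemma natS_gt0 n : (0 : R) < n.+1%:R. Proof. by rewrite ltr0n. Qed.

Lemma H_ge_ln b : ln (b.+2)%:R <= H R b.
Proof.
elim: b => [|b IH].
  rewrite /H big_ord1 /kk subn0 invr1; apply/RleP; rewrite -INRE /=; exact: ln2_le1.
rewrite HS.
have : ln (b.+3)%:R - ln (b.+2)%:R <= (b.+3%:R - b.+2%:R) / b.+2%:R.
  apply/RleP; apply: ln_diff; apply/RltP; exact: natS_gt0.
have -> : (b.+3%:R - b.+2%:R) / b.+2%:R = (b.+2%:R)^-1 :> R.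
  by rewrite -natrB // subSn // subnn div1r.
rewrite lerBlDr => h; apply: (le_trans h); exact: lerD.
Qed.

Lemma sum_ln n : n%:R * (ln n%:R - 1) <= \sum_(b < n) ln (b.+2)%:R :> R.
Proof.
elim: n => [|n IH]; first by rewrite big_ord0 mul0r.
rewrite big_ord_recr /=.
have l2 : 0 <= ln (n.+2)%:R - ln (n.+1)%:R.
  rewrite subr_ge0; apply/RleP; apply: ln_le'; [apply/RltP; exact: natS_gt0 | apply/RleP; by rewrite ler_nat].
case: n IH l2 => [|n] IH l2.
  rewrite big_ord0 add0r mul1r.
  have l1 : ln (1%:R : R) = 0 by rewrite mulr1n ln_1.
  have l3 : 0 <= ln (2%:R : R) by apply/RleP; apply: ln_ge0; apply/RleP; rewrite ler1n.
  lra.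
have hd : ln (n.+2)%:R - ln (n.+1)%:R <= (n.+2%:R - n.+1%:R) / n.+1%:R.
  apply/RleP; apply: ln_diff; apply/RltP; exact: natS_gt0.
have e : (n.+2%:R - n.+1%:R) / n.+1%:R = (n.+1%:R)^-1 :> R.
  by rewrite -natrB // subSn // subnn div1r.
rewrite e in hd.
have hn : (0 : R) < n.+1%:R := natS_gt0 n.
have hmul : n.+1%:R * (ln (n.+2)%:R - ln (n.+1)%:R) <= 1.
  have := ler_wpM2l (ltW hn) hd; rewrite mulfV //; exact: lt0r_neq0.
have -> : n.+2%:R = n.+1%:R + 1 :> R by rewrite -natr1.
move: IH hmul l2; rewrite -[n.+2%:R]natr1 => IH hmul l2.
nra.
Qed.

Lemma powle (a b : R) n : 0 <= a -> a <= b -> a ^+ n <= b ^+ n.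
Proof. move=> ha hab; apply: lerXn2r; rewrite ?nnegrE //; exact: le_trans hab. Qed.

Lemma S_ln m : m%:R * (ln m%:R - 1) <= S R m.
Proof.
apply: (le_trans (sum_ln m)); rewrite /S; apply: ler_sum => b _; exact: H_ge_ln.
Qed.

Lemma aux_hs0 (s M : R) : 5 / 4 * M <= s -> 2 <= M -> 0 <= s.
Proof. move=> *; lra. Qed.

Lemma aux_pow (M s : R) d : (0 < d)%nat -> 2 <= M -> 5 / 4 * M <= s ->
  M ^+ d <= 4 / 5 * s ^+ d.
Proof.
move=> hd hM hS.
apply: (@le_trans _ _ ((4 / 5 * s) ^+ d)).
  apply: powle; lra.
rewrite exprMn; case: d hd => [|d'] // _.
rewrite exprS -mulrA; apply: ler_wpM2l; first lra.
rewrite -[X in _ <= X]mul1r; apply: ler_wpM2r; first by apply: exprn_ge0; lra.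
apply: exprn_ile1; lra.
Qed.

Lemma aux_15 (S Md q sz : R) : S - Md <= (1 + 2 * q) * sz -> Md <= 4 / 5 * S ->
  1 <= q -> 0 <= sz -> S <= 15 * q * sz.
Proof. move=> *; nra. Qed.

Lemma aux_abs (M L s : R) : 2 <= M -> 0 <= L -> 5 / 4 * M <= s -> M * (L - 1) <= s ->
  `|M * (L - 1)| <= s.
Proof.
move=> h1 h2 h3 h4; rewrite ler_norml; apply/andP; split => //; nra.
Qed.

Lemma aux_P (p : R) : 1 < p -> 4 <= 4 * p.
Proof. move=> *; lra. Qed.

Lemma aux_fin (X S q P sz : R) : X <= S -> S <= 15 * q * sz -> q <= P -> 0 < P ->
  0 <= sz -> X / P <= 15 * sz.
Proof. move=> h1 h2 h3 h4 h5; rewrite ler_pdivrMr //; nra. Qed.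

Lemma final_ring (m d : nat) (T : eqType) (f : grid m d -> T) (Es : seq (T * T)) :
  (2 <= m)%nat -> (1 <= d)%nat -> uniq Es -> steiner_tc_spanner 2 f Es ->
  (m%:R * (ln m%:R - 1)) ^+ d / (4 * PI) ^+ d <= 15 * (size Es)%:R.
Proof.
move=> hm hd uE sp.
have hW := @mainS R m d T f Es sp.
rewrite (@Wstrict R m d) natrX in hW.
have hS1 : 5 / 4 * m%:R <= S R m by apply: S_ge.
have hS2 : m%:R * (ln m%:R - 1) <= S R m by apply: S_ln.
have hM : 2 <= (m%:R : R) by rewrite ler_nat.
have hsz : 0 <= ((size Es)%:R : R) by apply: ler0n.
have hln : 0 <= ln (m%:R : R).
  apply/RleP; apply: ln_ge0; apply/RleP; apply: le_trans hM; by rewrite ler1n.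
have hq : 1 <= (4%:R : R) ^+ d by apply: exprn_ege1; rewrite ler1n.
have hs0 := aux_hs0 hS1 hM.
have hMd := aux_pow hd hM hS1.
have hs15 := aux_15 hW hMd hq hsz.
have hX : (m%:R * (ln m%:R - 1)) ^+ d <= S R m ^+ d.
  apply: (le_trans (ler_norm _)); rewrite normrX; apply: powle; first exact: normr_ge0.
  exact: aux_abs.
have hP : 4 <= 4 * PI by apply: aux_P; apply/RltP; exact: PI_gt1.
have hPd : (4%:R : R) ^+ d <= (4 * PI) ^+ d by apply: powle => //; rewrite ler0n.
have hPd0 : 0 < (4 * PI) ^+ d.
  by apply: exprn_gt0; apply: lt_le_trans hP; rewrite ltr0n.
exact: aux_fin hX hs15 hPd hPd0 hsz.
Qed.

From mathcomp Require Import all_boot all_order all_algebra.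
From Stdlib Require Import Reals Lra.
From mathcomp Require Import Rstruct.
Import Order.TTheory GRing.Theory Num.Theory.

Local Open Scope ring_scope.
Lemma IZR15 : IZR 15 = 15%:R :> R.
Proof. by rewrite -INRE INR_IZR_INZ. Qed.
Lemma IZR4 : IZR 4 = 4%:R :> R.
Proof. by rewrite -INRE INR_IZR_INZ. Qed.

Lemma aux_last (X P sz : R) : X / P <= 15 * sz -> 15^-1 * X / P <= sz.
Proof.
move=> h; rewrite -mulrA mulrC ler_pdivrMr ?ltr0n //.
by rewrite [sz * _]mulrC.
Qed.
Local Close Scope ring_scope.
From Stdlib Require Import Reals.

Theorem theorem1 :
  exists c : R, (0 < c)%R /\
  forall m d : nat, 2 <= m -> 1 <= d ->
  forall (T : eqType) (f : grid m d -> T) (Es : seq (T * T)),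
    uniq Es -> steiner_tc_spanner 2 f Es ->
    (c * (INR m ^ d * (ln (INR m) - 1) ^ d) / (4 * PI) ^ d <= INR (size Es))%R.
Proof.
exists (/ 15)%R; split; first exact: c15.
move=> m d hm hd T f Es uE sp.
have h := final_ring hm hd uE sp.
apply/RleP; rewrite !RpowE !INRE !RmultE !RminusE RdivE !RinvE IZR4 IZR15 -exprMn.
exact: aux_last h.
Qed.
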